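(* Let $\kappa$ be an infinite cardinal. Then $\clubsuit^{\Diamond}_{\kappa^+}$ implies ${\rm Gal}(\mathscr{D}_{\kappa^+},\kappa^+,\kappa^{++})$.
   Context: For a regular uncountable cardinal $\lambda$, a superclub sequence for $\lambda$ is a sequence $(S_\alpha\mid\alpha<\lambda)$ with $S_\alpha\subseteq\alpha$ for each $\alpha$, such that for every $A\in[\lambda]^\lambda$ there is $B\in[A]^\lambda$ for which $\{\alpha<\lambda\mid B\cap\alpha=S_\alpha\}$ is stationary in $\lambda$; $\clubsuit^{\Diamond}_\lambda$ is the statement that such a sequence exists. $\mathscr{D}_{\kappa^+}$ is the club filter on $\kappa^+$. ${\rm Gal}(\mathscr{D}_{\kappa^+},\kappa^+,\kappa^{++})$ (the Galvin property) means: for every sequence $(C_\alpha\mid\alpha<\kappa^{++})$ of elements of $\mathscr{D}_{\kappa^+}$ there is $I\subseteq\kappa^{++}$ with $|I|=\kappa^+$ such that $\bigcap_{\alpha\in I}C_\alpha\in\mathscr{D}_{\kappa^+}$ (i.e. contains a club of $\kappa^+$). *)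

(* Defs.v *)
From mathcomp Require Import all_boot.
From mathcomp Require Import boolp classical_sets functions cardinality.
Set Implicit Arguments. Unset Strict Implicit. Unset Printing Implicit Defensive.
Local Open Scope classical_set_scope.
Local Open Scope card_scope.

Definition is_wellorder {T : Type} (lt : T -> T -> Prop) : Prop :=
  (forall x, ~ lt x x) /\
  (forall x y z, lt x y -> lt y z -> lt x z) /\
  (forall x y, lt x y \/ x = y \/ lt y x) /\
  well_founded lt.

(* (L, lt) is (order-isomorphic to) the successor cardinal |K|^+ viewed as an
   initial ordinal: a well-order of cardinality > |K| all of whose proper
   initial segments have cardinality <= |K|. *)
Definition is_succ_cardinal (K L : Type) (lt : L -> L -> Prop) : Prop :=
  is_wellorder lt /\
  ~ ([set: L] #<= [set: K]) /\
  (forall a : L, [set b | lt b a] #<= [set: K]).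

Definition unbounded {L : Type} (lt : L -> L -> Prop) (C : set L) : Prop :=
  forall a, exists c, C c /\ lt a c.

(* The hypothesis "a has some element below it and C is cofinal in a with
   elements strictly between any b < a and a" says exactly that a is a limit
   ordinal > 0 with sup (C cap a) = a. *)
Definition closed {L : Type} (lt : L -> L -> Prop) (C : set L) : Prop :=
  forall a, (exists b, lt b a) ->
    (forall b, lt b a -> exists c, C c /\ lt b c /\ lt c a) -> C a.

Definition club {L : Type} (lt : L -> L -> Prop) (C : set L) : Prop :=
  closed lt C /\ unbounded lt C.

Definition stationary {L : Type} (lt : L -> L -> Prop) (S : set L) : Prop :=
  forall C, club lt C -> exists a, C a /\ S a.

Definition club_filter {L : Type} (lt : L -> L -> Prop) (X : set L) : Prop :=
  exists C, club lt C /\ C `<=` X.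

Definition below {L : Type} (lt : L -> L -> Prop) (a : L) : set L :=
  [set b | lt b a].

Definition superclub_sequence {L : Type} (lt : L -> L -> Prop)
  (S : L -> set L) : Prop :=
  (forall a, S a `<=` below lt a) /\
  forall A : set L, [set: L] #<= A ->
    exists B : set L, B `<=` A /\ [set: L] #<= B /\
      stationary lt [set a | B `&` below lt a = S a].

Definition clubsuit_diamond {L : Type} (lt : L -> L -> Prop) : Prop :=
  exists S : L -> set L, superclub_sequence lt S.

(* Gal(D_lambda, lambda, mu) where lambda = (L, lt) and mu = |M|:
   every M-indexed family of club-filter sets has a subfamily indexed by a set
   of size lambda whose intersection is in the club filter. *)
Definition Galvin {L M : Type} (lt : L -> L -> Prop) : Prop :=
  forall Cs : M -> set L, (forall i, club_filter lt (Cs i)) ->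
    exists I : set M, I #= [set: L] /\
      club_filter lt (\bigcap_(i in I) Cs i).

(* Main.v *)
Require Import Defs.
From mathcomp Require Import all_boot.
From mathcomp Require Import boolp classical_sets functions cardinality.
From Stdlib Require Import Classical.
Local Open Scope classical_set_scope.
Local Open Scope card_scope.
Set Implicit Arguments. Unset Strict Implicit.

Lemma cle_inj T U (u0 : U) (A : set T) (B : set U) : A #<= B ->
  exists f : T -> U, (forall x, A x -> B (f x)) /\
    (forall x y, A x -> A y -> f x = f y -> x = y).
Proof.
move/card_leP => -[f].
exists (fun x => match pselect (A x) with left h => val (f (exist _ x (mem_set h))) | right _ => u0 end).
split.
- move=> x Ax; case: pselect => // h; exact: set_mem (valP _).
- move=> x y Ax Ay; case: pselect => // hx; case: pselect => // hy.
  move=> /val_inj /(@inj _ _ _ f) => /(_ (mem_set I) (mem_set I)) [] //.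
Qed.

Lemma inj_cle T U (A : set T) (B : set U) (f : T -> U) :
  (forall x, A x -> B (f x)) ->
  (forall x y, A x -> A y -> f x = f y -> x = y) -> A #<= B.
Proof.
move=> fAB finj.
have : $|{injfun A >-> B}|.
  apply/injfunPex; exists f; first by move=> x; exact: fAB.
  by move=> x y; rewrite !inE; exact: finj.
by case=> g; exact: inj_card_le.
Qed.

Definition le (T U : Type) (A : T -> Prop) (B : U -> Prop) :=
  exists f : T -> U, (forall x, A x -> B (f x)) /\
    (forall x y, A x -> A y -> f x = f y -> x = y).

Lemma le_refl T (A : T -> Prop) : le A A.
Proof. by exists id. Qed.

Lemma le_trans T U V (A : T -> Prop) (B : U -> Prop) (C : V -> Prop) :
  le A B -> le B C -> le A C.
Proof.
move=> [f [fAB fi]] [g [gBC gi]]; exists (fun x => g (f x)); split.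
  by move=> x Ax; apply: gBC; apply: fAB.
by move=> x y Ax Ay /gi h; apply: fi => //; apply: h; apply: fAB.
Qed.

Lemma le_sub T (A B : T -> Prop) : (forall x, A x -> B x) -> le A B.
Proof. by move=> AB; exists id; split. Qed.

Lemma le_prod T U T' U' (A : T -> Prop) (B : U -> Prop) (A' : T' -> Prop) (B' : U' -> Prop) :
  le A A' -> le B B' -> le (fun p : T * U => A p.1 /\ B p.2) (fun p : T' * U' => A' p.1 /\ B' p.2).
Proof.
move=> [f [f1 f2]] [g [g1 g2]]; exists (fun p => (f p.1, g p.2)); split.
  by move=> [x y] [/= ? ?]; split; [apply: f1|apply: g1].
move=> [x y] [x' y'] [/= ? ?] [/= ? ?] [/f2 e1 /g2 e2].
by rewrite e1 // e2.
Qed.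

Lemma le_image_surj T U (t0 : T) (A : T -> Prop) (B : U -> Prop) (f : T -> U) :
  (forall y, B y -> exists x, A x /\ f x = y) -> le B A.
Proof.
move=> surj.
exists (fun y => match pselect (exists x, A x /\ f x = y) with
  left h => proj1_sig (cid h) | right _ => t0 end); split.
- move=> y By; case: pselect => [h|/(_ (surj y By))] //.
  by case: (cid h) => x [].
- move=> y y' By By'; case: pselect => [h|/(_ (surj y By))] //.
  case: pselect => [h'|/(_ (surj y' By'))] //.
  have [_ e1] := proj2_sig (cid h); have [_ e2] := proj2_sig (cid h').
  by move=> e; rewrite -e1 -e2 e.
Qed.

Lemma greedy T Y (y0 : Y) (lt : T -> T -> Prop) (wf : well_founded lt)
  (A : T -> Prop) (P : T -> Y -> Prop) :
  exists f : T -> Y, forall i,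
    (exists y, P i y /\ forall j, A j -> lt j i -> f j <> y) ->
    P i (f i) /\ forall j, A j -> lt j i -> f j <> f i.
Proof.
pose F := fun i (rec : forall j, lt j i -> Y) =>
  match pselect (exists y, P i y /\ forall j (H : lt j i), A j -> rec j H <> y) with
  | left e => proj1_sig (cid e) | right _ => y0 end.
pose f := Fix wf (fun _ => Y) F.
have feq : forall i, f i = F i (fun j _ => f j).
  move=> i; rewrite /f Fix_eq // => x g h gh.
  have -> : g = h by apply: functional_extensionality_dep => y;
    apply: functional_extensionality_dep => p; apply: gh.
  by [].
exists f => i [y [Py Hy]].
rewrite feq /F; case: pselect => [e|ne]; last first.
  by exfalso; apply: ne; exists y; split => // j H Aj; apply: Hy.
case: (cid e) => z [Pz Hz] /=; split => // j Aj Hj; exact: Hz.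
Qed.

Definition total_on T (lt : T -> T -> Prop) (A : T -> Prop) :=
  forall x y, A x -> A y -> lt x y \/ x = y \/ lt y x.

Lemma cmp T U (t0 : T) (u0 : U) (lt : T -> T -> Prop) (wf : well_founded lt)
  (A : T -> Prop) (tot : total_on lt A) (B : U -> Prop) :
  le A B \/ exists i, A i /\ le B (fun j => A j /\ lt j i).
Proof.
have [f Hf] := greedy u0 wf A (fun _ y => B y).
case: (pselect (forall i, A i -> exists y, B y /\ forall j, A j -> lt j i -> f j <> y)) => [h|h].
  left; exists f; split.
    by move=> x Ax; case: (Hf x (h x Ax)).
  move=> x y Ax Ay fxy; case: (tot x y Ax Ay) => [xy|[//|yx]].
    by case: (Hf y (h y Ay)) => _ /(_ x Ax xy).
  by case: (Hf x (h x Ax)) => _ /(_ y Ay yx); rewrite fxy.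
right; move/existsNP: h => [i]; move/not_implyP => [Ai hi].
exists i; split => //; apply: (le_image_surj t0 (f := f)) => y By.
apply: contra_notP hi => ny; exists y; split => // j Aj ji fj; apply: ny.
by exists j.
Qed.


Definition inf T (X : T -> Prop) := le (fun _ : nat => True) X.

Lemma inf_infinite T (X : set T) : inf X <-> infinite_set X.
Proof.
split.
  move=> [f [f1 f2]]; apply/infiniteP; exact: (inj_cle (f := f)).
move=> h; have [x0 _] := infinite_setN0 h.
move/infiniteP: h => /(cle_inj x0) [f [f1 f2]]; exists f; split => //.
Qed.

Lemma inf_le T U (A : T -> Prop) (B : U -> Prop) : le A B -> inf A -> inf B.
Proof. by move=> h1 h2; exact: le_trans h2 h1. Qed.

Lemma inf_two T (X : T -> Prop) : inf X -> exists q1 q2, X q1 /\ X q2 /\ q1 <> q2.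
Proof.
move=> [e [e1 e2]]; exists (e 0%N), (e 1%N); split; [exact: e1|split; [exact: e1|]].
by move=> /e2 => /(_ I I).
Qed.

Lemma add1_prod T Q (A : T -> Prop) (B : Q -> Prop) (p : T) (q1 q2 : Q) :
  B q1 -> B q2 -> q1 <> q2 -> le A B ->
  le (fun x => A x \/ x = p) (fun z : Q * Q => B z.1 /\ B z.2).
Proof.
move=> b1 b2 q12 [f [f1 f2]].
exists (fun x => match pselect (x = p) with left _ => (q1, q2) | right _ => (f x, q1) end).
split.
  move=> x Ax; case: pselect => [_|nx]; first by split.
  by case: Ax => // Ax; split => //; apply: f1.
move=> x y Ax Ay; case: pselect => [->|nx]; case: pselect => [->|ny] //.
- by case=> _ /esym.
- by case=> _.
- case: Ax => // Ax; case: Ay => // Ay; case=> /f2; exact.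
Qed.

Lemma fin_add1 T (X : T -> Prop) (p : T) : ~ inf X -> ~ inf (fun x => X x \/ x = p).
Proof.
rewrite !inf_infinite => /contrapT hX; rewrite not_notE.
have -> : (fun x => X x \/ x = p) = X `|` [set p] by [].
by rewrite finite_setU; split => //; exact: finite_set1.
Qed.

Lemma fin_prod T (X : T -> Prop) : ~ inf X -> ~ inf (fun z : T * T => X z.1 /\ X z.2).
Proof.
rewrite !inf_infinite => /contrapT hX; rewrite not_notE.
have -> : (fun z : T * T => X z.1 /\ X z.2) = X `*` X by [].
exact: finite_setX.
Qed.

Lemma minimal T (lt : T -> T -> Prop) (wf : well_founded lt) (P : T -> Prop) :
  (exists x, P x) -> exists x, P x /\ forall y, lt y x -> ~ P y.
Proof.
move=> [x Px]; elim: (wf x) Px => {}x _ IH Px.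
case: (pselect (exists y, lt y x /\ P y)) => [[y [yx Py]]|h].
  exact: (IH y yx Py).
by exists x; split => // y yx Py; apply: h; exists y.
Qed.

Definition mx T (lt : T -> T -> Prop) x y := if pselect (lt x y) then y else x.
Definition lq T (lt : T -> T -> Prop) x y := lt x y \/ x = y.

Section WO.
Variables (T : Type) (lt : T -> T -> Prop) (wo : is_wellorder lt).

Lemma wo_irr x : ~ lt x x. Proof. by case: wo. Qed.
Lemma wo_trans x y z : lt x y -> lt y z -> lt x z.
Proof. by case: wo => _ [h _]; apply: h. Qed.
Lemma wo_tot x y : lt x y \/ x = y \/ lt y x. Proof. by case: wo => _ [_ [h _]]. Qed.
Lemma wo_wf : well_founded lt. Proof. by case: wo => _ [_ [_ h]]. Qed.

Lemma lq_trans x y z : lq lt x y -> lq lt y z -> lq lt x z.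
Proof.
move=> [xy|->] [yz|<-]; rewrite /lq; [left; exact: wo_trans xy yz|by left|by left|by right].
Qed.

Lemma lq_lt_trans x y z : lq lt x y -> lt y z -> lt x z.
Proof. by move=> [xy|->] yz //; exact: wo_trans xy yz. Qed.

Lemma lt_lq_trans x y z : lt x y -> lq lt y z -> lt x z.
Proof. by move=> xy [yz|<-] //; exact: wo_trans xy yz. Qed.

Lemma not_lt x y : ~ lt x y -> lq lt y x.
Proof. by case: (wo_tot x y) => [//|[->|h]] _; [right|left]. Qed.

Lemma mx_l x y : lq lt x (mx lt x y).
Proof. by rewrite /mx; case: pselect => h; [left|right]. Qed.
Lemma mx_r x y : lq lt y (mx lt x y).
Proof. by rewrite /mx; case: pselect => h; [right|apply: not_lt]. Qed.
Lemma mx_or x y : mx lt x y = x \/ mx lt x y = y.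
Proof. by rewrite /mx; case: pselect => h; [right|left]. Qed.

Lemma mx_lt x y z : lt x z -> lt y z -> lt (mx lt x y) z.
Proof. by move=> xz yz; case: (mx_or x y) => ->. Qed.

Definition gl (p q : T * T) :=
  lt (mx lt p.1 p.2) (mx lt q.1 q.2) \/
  (mx lt p.1 p.2 = mx lt q.1 q.2 /\ (lt p.1 q.1 \/ (p.1 = q.1 /\ lt p.2 q.2))).

Lemma gl_wf : well_founded gl.
Proof.
have wf := wo_wf.
suff H : forall m a b, mx lt a b = m -> Acc gl (a, b) by move=> [a b]; exact: H _ _ _ erefl.
move=> m; elim: (wf m) => {}m _ IHm a; elim: (wf a) => {}a _ IHa b; elim: (wf b) => {}b _ IHb.
move=> emx; constructor => -[a' b'] [/= h|/= [e [h|[e2 h]]]].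
- by rewrite emx in h; exact: (IHm _ h a' b' erefl).
- by apply: (IHa a' h b'); rewrite e emx.
- by rewrite e2 in e *; apply: (IHb b' h); rewrite e emx.
Qed.

Lemma gl_tot p q : gl p q \/ p = q \/ gl q p.
Proof.
case: p q => [a b] [c d]; rewrite /gl /=.
case: (wo_tot (mx lt a b) (mx lt c d)) => [h|[e|h]].
- by left; left.
- case: (wo_tot a c) => [h|[ac|h]].
  + by left; right; split => //; left.
  + subst c; case: (wo_tot b d) => [h|[<-|h]].
    * by left; right; split => //; right.
    * by right; left.
    * by right; right; right; split => //; right.
  + by right; right; right; split => //; left.
- by right; right; left.
Qed.

Lemma gl_seg p q : gl p q -> lq lt p.1 (mx lt q.1 q.2) /\ lq lt p.2 (mx lt q.1 q.2).
Proof.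
move=> h; have hm : lq lt (mx lt p.1 p.2) (mx lt q.1 q.2).
  by case: h => [h|[e _]]; [left|right].
by split; apply: lq_trans hm; [apply: mx_l|apply: mx_r].
Qed.

End WO.


Lemma hess T (lt : T -> T -> Prop) (wo : is_wellorder lt) b :
  inf (fun x => lt x b) ->
  le (fun z : T * T => lt z.1 b /\ lt z.2 b) (fun x => lt x b).
Proof.
elim: (wo_wf wo b) => {}b _ IH Hinf.
case: (pselect (exists c, lt c b /\ le (fun x => lt x b) (fun x => lt x c))) => [[c [cb hc]]|hcard].
  have Hc := inf_le hc Hinf.
  apply: (le_trans (le_prod hc hc)); apply: (le_trans (IH c cb Hc)).
  by apply: le_sub => x xc; move=> /=; exact: (wo_trans wo xc cb).
have [q1 [q2 [h1 [h2 _]]]] := inf_two Hinf.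
have [//|[i [Ai hi]]] := cmp (q1, q1) q1 (gl_wf wo) (A := fun z : T * T => lt z.1 b /\ lt z.2 b)
  (fun x y _ _ => gl_tot wo x y) (fun x => lt x b).
exfalso.
pose m := mx lt i.1 i.2.
have mb : lt m b by apply: mx_lt; case: Ai.
pose Z := fun x => lt x m \/ x = m.
have hZ : le (fun x => lt x b) (fun z : T * T => Z z.1 /\ Z z.2).
  apply: (le_trans hi); apply: le_sub => j [_ /(gl_seg wo) [j1 j2]]; split.
    by case: j1 => [h|h]; [left|right].
  by case: j2 => [h|h]; [left|right].
case: (pselect (inf (fun x => lt x m))) => [Hm|Hm].
  have [r1 [r2 [g1 [g2 g12]]]] := inf_two Hm.
  have hz : le Z (fun x => lt x m).
    apply: (le_trans (add1_prod m g1 g2 g12 (le_refl _))).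
    exact: IH m mb Hm.
  apply: (hcard); exists m; split => //.
  apply: (le_trans hZ); apply: (le_trans (le_prod hz hz)).
  exact: IH m mb Hm.
have := fin_prod (@fin_add1 _ _ m Hm); apply; exact: inf_le hZ Hinf.
Qed.


Lemma nomax T Q (lt : T -> T -> Prop) (wo : is_wellorder lt)
  (QQ : le (fun _ : Q * Q => True) (fun _ : Q => True))
  (nle : ~ le (fun _ : T => True) (fun _ : Q => True))
  (segs : forall a, le (fun x => lt x a) (fun _ : Q => True))
  (q1 q2 : Q) (q12 : q1 <> q2) : forall x, exists y, lt x y.
Proof.
move=> x; apply: contra_notP nle => nx; have hm : forall y, ~ lt x y by move=> y h; apply: nx; exists y.
apply: (le_trans (B := fun y => lt y x \/ y = x)).
  apply: le_sub => y _; have := not_lt wo (hm y); by case=> h; [left|right].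
apply: (le_trans (add1_prod x (q1 := q1) (q2 := q2) I I q12 (segs x))).
apply: (le_trans _ QQ); apply: le_sub => //.
Qed.

Lemma regular T Q (lt : T -> T -> Prop) (wo : is_wellorder lt)
  (QQ : le (fun _ : Q * Q => True) (fun _ : Q => True))
  (nle : ~ le (fun _ : T => True) (fun _ : Q => True))
  (segs : forall a, le (fun x => lt x a) (fun _ : Q => True))
  (nm : forall x, exists y, lt x y) (q0 : Q) :
  forall X, le X (fun _ : Q => True) -> exists c, forall x, X x -> lt x c.
Proof.
move=> X [h [_ hi]]; apply: contra_notP nle => nb.
have H1 : forall y, exists x, X x /\ ~ lt x y.
  move=> y; apply: contra_notP nb => ny; exists y => x Xx.
  by apply: contra_notP ny => nxy; exists x.
have [xf Hxf] := choice H1.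
have [s Hs] := choice nm.
have H2 : forall z, exists g : T -> Q, forall x y, lt x z -> lt y z -> g x = g y -> x = y.
  by move=> z; have [g [_ gi]] := segs z; exists g.
have [g Hg] := choice H2.
apply: (le_trans _ QQ).
exists (fun y => (h (xf y), g (s (xf y)) y)); split => // y y' _ _ [e1 e2].
have ex : xf y = xf y' by apply: hi => //; [case: (Hxf y)|case: (Hxf y')].
have lt1 : forall y, lt y (s (xf y)).
  move=> z; apply: (lq_lt_trans wo (y := xf z)); last exact: Hs.
  by apply: not_lt; case: (Hxf z).
apply: (Hg (s (xf y)) y y' (lt1 y)).
  by rewrite ex; exact: lt1.
by rewrite [in RHS]ex.
Qed.


Lemma cle_le T U (u0 : U) (A : set T) (B : set U) : A #<= B -> le A B.
Proof. exact: cle_inj. Qed.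
Lemma le_cle T U (A : set T) (B : set U) : le A B -> A #<= B.
Proof. by move=> [f [f1 f2]]; exact: inj_cle f1 f2. Qed.

Lemma setup (K L M : Type) (ltL : L -> L -> Prop) (ltM : M -> M -> Prop) :
  infinite_set [set: K] ->
  is_succ_cardinal K ltL ->
  is_succ_cardinal L ltM ->
  exists (l0 : L) (k0 : K),
  (forall x, exists y, ltL x y) /\
  (forall X, le X (fun _ : K => True) -> exists c, forall x, X x -> ltL x c) /\
  (forall a, le (fun x => ltL x a) (fun _ : K => True)) /\
  le (fun _ : K => True) (fun _ : L => True) /\
  le (fun _ : L * L => True) (fun _ : L => True) /\
  le (fun _ : K * K => True) (fun _ : K => True) /\
  ~ le (fun _ : M => True) (fun _ : L => True) /\
  ~ le (fun _ : L => True) (fun _ : K => True) /\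
  le (fun _ : nat => True) (fun _ : K => True).
Proof.
move=> Kinf [woL [nLK segL]] [woM [nML segM]].
have [k0 _] := infinite_setN0 Kinf.
have infK : inf (fun _ : K => True) by apply/inf_infinite.
have segL' : forall a, le (fun x => ltL x a) (fun _ : K => True).
  by move=> a; apply: (cle_le k0); exact: segL.
have nLK' : ~ le (fun _ : L => True) (fun _ : K => True).
  by move=> h; apply: nLK; exact: le_cle.
have nML' : ~ le (fun _ : M => True) (fun _ : L => True).
  by move=> h; apply: nML; exact: le_cle.
have [l0 _] : exists l : L, True.
  apply: contra_notP nLK' => nl; exists (fun _ => k0); split => // x.
  by exfalso; apply: nl; exists x.
have [a0 Ka0] : exists a0, le (fun _ : K => True) (fun x => ltL x a0).
  have [h|[i [_ hi]]] := cmp l0 k0 (wo_wf woL) (A := fun _ : L => True)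
    (fun x y _ _ => wo_tot woL x y) (fun _ : K => True).
    by exfalso; apply: nLK'.
  by exists i; apply: (le_trans hi); apply: le_sub => x [].
have infa0 : inf (fun x => ltL x a0) by exact: inf_le Ka0 infK.
have KK : le (fun _ : K * K => True) (fun _ : K => True).
  apply: (le_trans (B := fun z : K * K => True /\ True)); first exact: le_sub.
  apply: (le_trans (le_prod Ka0 Ka0)); apply: (le_trans (hess woL infa0)).
  exact: segL'.
have [q1 [q2 [_ [_ q12]]]] := inf_two infK.
have nmL := nomax woL KK nLK' segL' q12.
have KL : le (fun _ : K => True) (fun _ : L => True).
  by apply: (le_trans Ka0); exact: le_sub.
have LL : le (fun _ : L * L => True) (fun _ : L => True).
  have [h|[i [_ hi]]] := cmp (l0, l0) l0 (gl_wf woL) (A := fun _ : L * L => True)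
    (fun x y _ _ => gl_tot woL x y) (fun _ : L => True).
    by [].
  exfalso; apply: nLK'.
  pose m := mx ltL i.1 i.2.
  pose Z := fun x => ltL x m \/ x = m.
  have hZ : le (fun _ : L => True) (fun z : L * L => Z z.1 /\ Z z.2).
    apply: (le_trans hi); apply: le_sub => j [_ /(gl_seg woL) [j1 j2]]; split.
      by case: j1 => [h|h]; [left|right].
    by case: j2 => [h|h]; [left|right].
  have hz : le Z (fun _ : K => True).
    apply: (le_trans (add1_prod m (q1 := q1) (q2 := q2) I I q12 (segL' m))).
    by apply: (le_trans _ KK); exact: le_sub.
  apply: (le_trans hZ); apply: (le_trans (le_prod hz hz)).
  by apply: (le_trans _ KK); exact: le_sub.
exists l0, k0; do !split => //.
exact: regular woL KK nLK' segL' nmL k0.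
Qed.


Theorem theorem2p2 (K L M : Type) (ltL : L -> L -> Prop) (ltM : M -> M -> Prop) :
  infinite_set [set: K] ->
  is_succ_cardinal K ltL ->
  is_succ_cardinal L ltM ->
  clubsuit_diamond ltL ->
  @Galvin L M ltL.
Proof.
move=> Kinf hL hM [S [Ssub Sguess]].
have [l0 [k0 [nmL [regL [segL [KL [LL [KK [nML [nLK NK]]]]]]]]]] := setup Kinf hL hM.
have [woL _] := hL.
move=> Cs HCs.
have [D HD] := choice (fun i => HCs i).
have bnd : forall i (g : L -> L), exists c, forall j, ltL j i -> ltL (g j) c.
  move=> i g.
  have hY : le (fun y => exists j, ltL j i /\ g j = y) (fun _ : K => True).
    apply: (le_trans _ (segL i)).
    by apply: (le_image_surj l0 (f := g)) => y [j [ji <-]]; exists j.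
  have [c Hc] := regL _ hY; exists c => j ji; apply: Hc; by exists j.
have unb_ge : forall X : set L, unbounded ltL X -> le (fun _ : L => True) X.
  move=> X Xu.
  have [f Hf] := greedy l0 (wo_wf woL) (fun _ => True) (fun _ y => X y).
  have H : forall i, exists y, X y /\ forall j, True -> ltL j i -> f j <> y.
    move=> i; have [c Hc] := bnd i f; have [y [Xy cy]] := Xu c.
    exists y; split => // j _ ji fj; have := Hc j ji; rewrite fj => yc.
    exact: (wo_irr woL (wo_trans woL yc cy)).
  exists f; split; first by move=> x _; case: (Hf x (H x)).
  move=> x y _ _ fxy; case: (wo_tot woL x y) => [xy|[//|yx]].
    by case: (Hf y (H y)) => _ /(_ x I xy).
  by case: (Hf x (H x)) => _ /(_ y I yx); rewrite fxy.
have ge_unb : forall X : set L, le (fun _ : L => True) X -> unbounded ltL X.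
  move=> X hX a; apply: contra_notP nLK => na.
  have [s Hs] := nmL a.
  apply: (le_trans hX); apply: (le_trans _ (segL s)); apply: le_sub => c Xc.
  apply: (lq_lt_trans woL (y := a)) => //; apply: not_lt => // ac.
  by apply: na; exists c.
have HB0 : forall i, exists B : set L, B `<=` D i /\ [set: L] #<= B /\
      stationary ltL [set a | B `&` below ltL a = S a].
  move=> i; apply: Sguess; apply: le_cle.
  by case: (HD i) => -[_ Du] _; exact: unb_ge.
have [Bf HB] := choice HB0.
pose Tset i a := Bf i `&` below ltL a = S a.
have Tunb : forall i a, exists x, ltL a x /\ Tset i x.
  move=> i a; case: (HB i) => _ [_ st].
  have hc : club ltL (fun x => ltL a x).
    split.
      move=> a' [b ba'] h; have [c [ac [_ ca']]] := h b ba'.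
      exact: (wo_trans woL ac ca').
    move=> y; have [c Hc] := nmL (mx ltL a y); exists c; split.
      exact: (lq_lt_trans woL (mx_l ltL a y) Hc).
    exact: (lq_lt_trans woL (mx_r woL a y) Hc).
  have [x [ax Tx]] := st _ hc.
  by exists x.
have [ist Hist] : exists ist, forall d, Tset ist d -> ~ le (fun i => Tset i d) (fun _ : K => True).
  apply: contra_notP nML => nist.
  have H1 : forall i, exists d, Tset i d /\ le (fun i => Tset i d) (fun _ : K => True).
    move=> i; apply: contra_notP nist => ni; exists i => d Td hd; apply: ni; by exists d.
  have [df Hdf] := choice H1.
  have H2 : forall d, exists g : M -> K, le (fun i => Tset i d) (fun _ : K => True) ->
      forall x y, Tset x d -> Tset y d -> g x = g y -> x = y.
    move=> d; case: (pselect (le (fun i => Tset i d) (fun _ : K => True))) => [[g [_ gi]]|nd].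
      by exists g.
    by exists (fun _ => k0).
  have [gf Hgf] := choice H2.
  apply: (le_trans (B := fun p : L * K => True /\ True)).
    exists (fun i => (df i, gf (df i) i)); split => // x y _ _ [e1 e2].
    have [Tx hx] := Hdf x; have [Ty hy] := Hdf y.
    apply: (Hgf (df x) hx) => //; first by rewrite e1.
    by rewrite [in RHS]e1.
  apply: (le_trans (le_prod (le_refl (fun _ : L => True)) KL)).
  apply: (le_trans _ LL); exact: le_sub.
have [dj Hdj] := choice (fun j => Tunb ist j).
have [f Hf0] := greedy ist (wo_wf woL) (fun _ => True) (fun j a => Tset a (dj j)).
have Hf : forall j, Tset (f j) (dj j) /\ forall k, True -> ltL k j -> f k <> f j.
  move=> j; apply: Hf0; apply: contra_notP (Hist (dj j) (proj2 (Hdj j))) => nj.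
  apply: (le_trans _ (segL j)).
  apply: (le_image_surj l0 (f := f)) => a Ta.
  apply: contra_notP nj => na; exists a; split => // k _ kj fk; apply: na.
  by exists k.
have finj : forall x y, f x = f y -> x = y.
  move=> x y fxy; case: (wo_tot woL x y) => [xy|[//|yx]].
    by case: (Hf y) => _ /(_ x I xy).
  by case: (Hf x) => _ /(_ y I yx); rewrite fxy.
exists (fun a => exists j, f j = a); split.
  apply/card_eqPle; split; apply: le_cle.
    by apply: (le_image_surj l0 (f := f)) => a [j <-]; exists j.
  by exists f; split => [x _|x y _ _]; [exists x|exact: finj].
pose Bs := Bf ist.
pose E := fun d => ((exists b, ltL b d) /\ forall b, ltL b d -> exists c, Bs c /\ ltL b c /\ ltL c d)
   /\ forall j, ltL j d -> D (f j) d.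
exists E; split; last first.
  move=> d [[hb hacc] hj] a [j <-].
  case: (HD (f j)) => -[Dcl _] DC; apply: DC.
  case: (wo_tot woL j d) => [jd|jd]; first exact: hj.
  have dlt : ltL d (dj j).
    apply: (lq_lt_trans woL (y := j)); last exact: (proj1 (Hdj j)).
    by case: jd => [->|h]; [right|left].
  apply: Dcl => // b bd; have [c [Bc [bc cd]]] := hacc b bd.
  exists c; split => //.
  have cdj : ltL c (dj j) := wo_trans woL cd dlt.
  have e : Bs `&` below ltL (dj j) = Bf (f j) `&` below ltL (dj j).
    by rewrite (proj2 (Hdj j)) (proj1 (Hf j)).
  have : (Bf (f j) `&` below ltL (dj j)) c by rewrite -e; split.
  by case=> h _; case: (HB (f j)) => /(_ c h).
split.
  move=> d [b0 b0d] h; split.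
    split; first by exists b0.
    move=> b bd; have [e [[[_ He] _] [be ed]]] := h b bd.
    have [c [Bc [bc ce]]] := He b be.
    by exists c; split => //; split => //; exact: (wo_trans woL ce ed).
  move=> j jd; case: (HD (f j)) => -[Dcl _] _; apply: Dcl; first by exists b0.
  move=> b bd; have [e [[_ He] [be ed]]] := h (mx ltL b j) (mx_lt bd jd).
  exists e; split; last first.
    by split => //; exact: (lq_lt_trans woL (mx_l ltL b j) be).
  apply: He; exact: (lq_lt_trans woL (mx_r woL b j) be).
have Bsu := ge_unb _ (cle_le l0 (proj1 (proj2 (HB ist)))).
have Hnext : forall x, exists y, ltL x y /\ (exists c, Bs c /\ ltL x c /\ ltL c y) /\
    forall j, ltL j x -> exists d, D (f j) d /\ ltL x d /\ ltL d y.
  move=> x; have [c [Bc xc]] := Bsu x.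
  have Hd : forall j, exists d, D (f j) d /\ ltL x d.
    by move=> j; case: (HD (f j)) => -[_ Du] _; exact: Du.
  have [dd Hdd] := choice Hd.
  have [c1 Hc1] := bnd x dd.
  have [y Hy] := nmL (mx ltL c c1).
  have cy : ltL c y := lq_lt_trans woL (mx_l ltL c c1) Hy.
  have c1y : ltL c1 y := lq_lt_trans woL (mx_r woL c c1) Hy.
  exists y; split; first exact: (wo_trans woL xc cy).
  split; first by exists c.
  move=> j jx; exists (dd j); split; first exact: (proj1 (Hdd j)).
  by split; [exact: (proj2 (Hdd j))|exact: (wo_trans woL (Hc1 j jx) c1y)].
have [next Hnx] := choice Hnext.
move=> a.
pose be n := iter n next a.
have beS : forall n, be n.+1 = next (be n) by [].
have mono : forall y n k, ltL y (be n) -> ltL y (be (n + k)).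
  move=> y n k yn; elim: k => [|k IH]; first by rewrite addn0.
  rewrite addnS beS; exact: (wo_trans woL IH (proj1 (Hnx _))).
have hX : le (fun y => exists n, be n = y) (fun _ : K => True).
  apply: (le_trans _ NK); by apply: (le_image_surj 0%N (f := be)) => y [n <-]; exists n.
have [c Hc] := regL _ hX.
have [d [Ud minU]] := minimal (wo_wf woL) (P := fun u => forall n, ltL (be n) u)
  (ex_intro _ c (fun n => Hc _ (ex_intro _ n erefl))).
have below_be : forall y, ltL y d -> exists n, ltL y (be n).
  move=> y yd; have : ~ (forall n, ltL (be n) y) by exact: minU.
  move=> /existsNP [n /(not_lt woL) h]; exists n.+1.
  rewrite beS; exact: (lq_lt_trans woL h (proj1 (Hnx _))).
exists d; split; last exact: (Ud 0%N).
split.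
  split; first by exists (be 0%N).
  move=> b bd; have [n bn] := below_be b bd.
  have [_ [[c2 [Bc2 [nc2 c2n]]] _]] := Hnx (be n).
  exists c2; split => //; split; first exact: (wo_trans woL bn nc2).
  by rewrite -beS in c2n; exact: (wo_trans woL c2n (Ud _)).
move=> j jd; have [n jn] := below_be j jd.
case: (HD (f j)) => -[Dcl _] _; apply: Dcl; first by exists (be 0%N).
move=> b bd; have [m bm] := below_be b bd.
have jk := mono _ _ m jn.
have bk : ltL b (be (n + m)) by rewrite addnC; exact: mono.
have [_ [_ Hj]] := Hnx (be (n + m)).
have [e [De [ke ek]]] := Hj j jk.
exists e; split => //; split; first exact: (wo_trans woL bk ke).
by rewrite -beS in ek; exact: (wo_trans woL ek (Ud _)).
Qed.
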